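(* Let $\mathcal{L}^*\supseteq\mathcal{L}$ be relational languages and let $\mathbf{K}$ be a Fraïssé $\mathcal{L}$-structure. Suppose $\mathbf{K}^*$ is a recurrent, precompact $\mathcal{L}^*$-expansion of $\mathbf{K}$ such that $\mathbf{K}^*\to(\mathbf{K}^* )^{\mathbf{A}^*}_2$ for every finite substructure $\mathbf{A}^*\subseteq\mathbf{K}^*$. Then $\mathbf{K}$ has finite big Ramsey degrees, and $\mathbf{K}^*$ is a (recurrent) big Ramsey structure for $\mathbf{K}$; in fact $\mathrm{BRD}(\mathbf{A},\mathbf{K})=|\mathbf{K}^*(\mathbf{A})|$ for every finite $\mathbf{A}\subseteq\mathbf{K}$.
   Context: For structures $\mathbf{A},\mathbf{B}$, $\mathrm{Emb}(\mathbf{A},\mathbf{B})$ is the set of embeddings. For structures $\mathbf{A}\le\mathbf{B}\le\mathbf{C}$, $\mathbf{C}\to(\mathbf{B})^{\mathbf{A}}_2$ means: for every coloring $\chi:\mathrm{Emb}(\mathbf{A},\mathbf{C})\to 2$ there is $g\in\mathrm{Emb}(\mathbf{B},\mathbf{C})$ with $\chi$ constant on $g\circ\mathrm{Emb}(\mathbf{A},\mathbf{B})$. An $\mathcal{L}^*$-expansion $\mathbf{M}^*$ of an $\mathcal{L}$-structure $\mathbf{M}$ is an $\mathcal{L}^*$-structure on the same set whose $\mathcal{L}$-reduct is $\mathbf{M}$. For finite $\mathbf{B}\le\mathbf{M}$, $\mathbf{M}^*(\mathbf{B})$ is the set of $\mathcal{L}^*$-expansions $\mathbf{B}^*$ of $\mathbf{B}$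 that embed into $\mathbf{M}^*$; $\mathbf{M}^*$ is precompact if $\mathbf{M}^*(\mathbf{B})$ is finite for every finite $\mathbf{B}\le\mathbf{M}$. For $f\in\mathrm{Emb}(\mathbf{B},\mathbf{M})$, $\mathbf{M}^*\cdot f$ is the unique $\mathbf{B}^*\in\mathbf{M}^*(\mathbf{B})$ with $f\in\mathrm{Emb}(\mathbf{B}^*,\mathbf{M}^* )$; for $\eta\in\mathrm{Emb}(\mathbf{M},\mathbf{M})$, $\mathbf{M}^*\cdot\eta$ is the expansion of $\mathbf{M}$ pulled back along $\eta$. $\mathbf{M}^*$ is recurrent if $\mathrm{Emb}(\mathbf{M}^*,\mathbf{M}^*\cdot\eta)\ne\emptyset$ for every $\eta\in\mathrm{Emb}(\mathbf{M},\mathbf{M})$. For finite $\mathbf{A}\le\mathbf{K}$, the big Ramsey degree $\mathrm{BRD}(\mathbf{A},\mathbf{K})$ is the least $t$ (if it exists) such that for every $r>t$ and $\chi:\mathrm{Emb}(\mathbf{A},\mathbf{K})\to r$ there is $g\in\mathrm{Emb}(\mathbf{K},\mathbf{K})$ with $|\chi[g\circ\mathrm{Emb}(\mathbf{A},\mathbf{K})]|\le t$; $\mathbf{K}$ has finite big Ramsey degrees if this is finite for all finite $\mathbf{A}\le\mathbf{K}$. A big Ramsey structure for $\mathbf{K}$ is an expansion $\mathbf{K}^*$ such that for every finite $\mathbf{A}\le\mathbf{K}$, $|\mathbf{K}^*(\mathbf{A})|=\mathrm{BRD}(\mathbf{A},\mathbf{K})$ and for every $g\in\mathrm{Emb}(\mathbf{K},\mathbf{K})$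 the coloring $f\mapsto\mathbf{K}^*\cdot f$ takes all $|\mathbf{K}^*(\mathbf{A})|$ values on $g\circ\mathrm{Emb}(\mathbf{A},\mathbf{K})$. *)

(* Defs.v *)
From Stdlib Require Import List Arith Vectors.Fin.


Record lang := Lang { sym : Type; arity : sym -> nat }.
Arguments arity {l} _.

(** A language L* ⊇ L is presented as L together with the extra symbols E:
    the symbols of L* are those of L plus those of E. *)
Definition Lsum (L E : lang) : lang :=
  Lang (sym L + sym E) (fun s : sym L + sym E =>
          match s with inl s => arity s | inr e => arity e end).

Record structure (L : lang) := Struct {
  carrier :> Type;
  rel : forall s : sym L, (Fin.t (arity s) -> carrier) -> Prop }.
Arguments Struct {L} carrier rel.
Arguments rel {L} _ _ _.
Arguments carrier {L} _.

Definition is_emb {L} (A B : structure L) (f : A -> B) : Prop :=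
  (forall x y, f x = f y -> x = y) /\
  (forall (s : sym L) (x : Fin.t (arity s) -> A),
      rel A s x <-> rel B s (fun i => f (x i))).

Definition Emb {L} (A B : structure L) := { f : A -> B | is_emb A B f }.

Definition is_finite {L} (A : structure L) : Prop :=
  exists l : list (carrier A), forall x, In x l.

(** A finite substructure of K (up to isomorphism): a finite structure
    that embeds into K. *)
Definition finite_sub {L} (A K : structure L) : Prop :=
  is_finite A /\ inhabited (Emb A K).

Definition countably_infinite (T : Type) : Prop :=
  exists e : nat -> T, (forall m n, e m = e n -> m = n) /\ (forall x, exists n, e n = x).

Definition is_aut {L} (K : structure L) (s : K -> K) : Prop :=
  is_emb K K s /\ (forall y, exists x, s x = y).

(** Ultrahomogeneity: every isomorphism between finite substructures
    (given as a map p that is a partial isomorphism on the finite set S)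
    extends to an automorphism. *)
Definition ultrahomogeneous {L} (K : structure L) : Prop :=
  forall (S : K -> Prop) (p : K -> K),
    (exists l, forall x, S x -> In x l) ->
    (forall x y, S x -> S y -> p x = p y -> x = y) ->
    (forall (s : sym L) (x : Fin.t (arity s) -> K), (forall i, S (x i)) ->
        (rel K s x <-> rel K s (fun i => p (x i)))) ->
    exists sg, is_aut K sg /\ forall x, S x -> sg x = p x.

Definition Fraisse {L} (K : structure L) : Prop :=
  countably_infinite (carrier K) /\ ultrahomogeneous K.

(** Expansions.  An L*-expansion of an L-structure M is given by an
    interpretation of the extra symbols E on the carrier of M; its L-reduct
    is M by construction. *)
Definition expansion {L} (E : lang) (M : structure L) :=
  forall e : sym E, (Fin.t (arity e) -> M) -> Prop.

Definition expand {L E} (M : structure L) (X : expansion E M) : structure (Lsum L E) :=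
  Struct (carrier M)
    (fun s => match s as s0 return (Fin.t (arity (l:=Lsum L E) s0) -> M) -> Prop with
              | inl s => rel M s
              | inr e => X e end).

Definition exps_in {L E} (M : structure L) (X : expansion E M) (B : structure L)
  (Y : expansion E B) : Prop :=
  inhabited (Emb (expand B Y) (expand M X)).

Definition pull {L E} (B M : structure L) (X : expansion E M) (f : B -> M)
  : expansion E B := fun e x => X e (fun i => f (x i)).

Definition set_finite {T} (P : T -> Prop) : Prop :=
  exists l : list T, forall x, P x -> In x l.

Definition has_card {T} (P : T -> Prop) (n : nat) : Prop :=
  exists l : list T, NoDup l /\ length l = n /\ forall x, P x <-> In x l.

Definition card_le {T} (P : T -> Prop) (t : nat) : Prop :=
  exists l : list T, length l <= t /\ forall x, P x -> In x l.

Definition precompact {L E} (M : structure L) (X : expansion E M) : Prop :=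
  forall B : structure L, finite_sub B M -> set_finite (exps_in M X B).

Definition recurrent {L E} (M : structure L) (X : expansion E M) : Prop :=
  forall eta : Emb M M,
    inhabited (Emb (expand M X) (expand M (pull M M X (proj1_sig eta)))).

Definition arrow2 {L} (C B A : structure L) : Prop :=
  forall chi : Emb A C -> bool,
    exists (g : Emb B C) (c : bool),
      forall (f : Emb A B) (h : Emb A C),
        (forall a, proj1_sig h a = proj1_sig g (proj1_sig f a)) -> chi h = c.

Definition brd_bound {L} (A K : structure L) (t : nat) : Prop :=
  forall r, t < r -> forall chi : Emb A K -> Fin.t r,
    exists g : Emb K K,
      card_le (fun c => exists f h : Emb A K,
                  (forall a, proj1_sig h a = proj1_sig g (proj1_sig f a)) /\
                  c = chi h) t.

Definition BRD {L} (A K : structure L) (t : nat) : Prop :=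
  brd_bound A K t /\ forall t', brd_bound A K t' -> t <= t'.

Definition finite_BRD {L} (K : structure L) : Prop :=
  forall A : structure L, finite_sub A K -> exists t, BRD A K t.

Definition big_ramsey_structure {L E} (K : structure L) (X : expansion E K) : Prop :=
  forall A : structure L, finite_sub A K ->
    exists n, has_card (exps_in K X A) n /\ BRD A K n /\
      forall g : Emb K K, forall Y : expansion E A, exps_in K X A Y ->
        exists f : Emb A K,
          pull A K X (fun a => proj1_sig g (proj1_sig f a)) = Y.

(* Main.v *)
Require Import Defs.
From Stdlib Require Import List Arith Vectors.Fin.
From Stdlib Require Import Classical FunctionalExtensionality ProofIrrelevance ClassicalEpsilon PropExtensionality Lia.

Definition agree {L E} (A M : structure L) (Y : expansion E A) (Z : expansion E M) (f : A -> M) : Prop :=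
  forall e x, Y e x <-> Z e (fun i => f (x i)).

Lemma emb_split {L E} (A M : structure L) (Y : expansion E A) (Z : expansion E M) (f : A -> M) :
  is_emb (expand A Y) (expand M Z) f <-> is_emb A M f /\ agree A M Y Z f.
Proof.
  split.
  - intros [Hi Hr]. split. split. exact Hi. intros s x. exact (Hr (inl s) x).
    intros e x. exact (Hr (inr e) x).
  - intros [[Hi Hr] Hz]. split. exact Hi. intros [s|e] x. exact (Hr s x). exact (Hz e x).
Qed.

Lemma emb_id {L} (A : structure L) : is_emb A A (fun x => x).
Proof. split; [auto | intros; tauto]. Qed.

Lemma emb_comp {L} (A B C : structure L) f g :
  is_emb A B f -> is_emb B C g -> is_emb A C (fun a => g (f a)).
Proof.
  intros [fi fr] [gi gr]; split.
  - intros x y H; apply fi, gi, H.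
  - intros s x. rewrite (fr s x). exact (gr s (fun i => f (x i))).
Qed.

Definition idE {L} (A : structure L) : Emb A A := exist _ _ (emb_id A).
Definition comp {L} {A B C : structure L} (g : Emb B C) (f : Emb A B) : Emb A C :=
  exist _ _ (emb_comp A B C _ _ (proj2_sig f) (proj2_sig g)).

Lemma emb_ext {L} (A B : structure L) (h h' : Emb A B) :
  (forall a, proj1_sig h a = proj1_sig h' a) -> h = h'.
Proof.
  destruct h as [h Hh], h' as [h' Hh']; simpl; intro H.
  assert (h = h') by (apply functional_extensionality; auto). subst.
  f_equal; apply proof_irrelevance.
Qed.

Lemma comp_assoc {L} {A B C D : structure L} (g1 : Emb C D) (g2 : Emb B C) (f : Emb A B) :
  comp (comp g1 g2) f = comp g1 (comp g2 f).
Proof. apply emb_ext; reflexivity. Qed.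

Lemma multi {L'} (As C : structure L') (Har : arrow2 C C As) :
  forall (lc : list nat) (chi : Emb As C -> nat), (forall h, In (chi h) lc) ->
  exists g : Emb C C, forall f f', chi (comp g f) = chi (comp g f').
Proof.
  induction lc as [|c lc IH]; intros chi Hc.
  - exists (idE C). intros f. destruct (Hc (comp (idE C) f)).
  - destruct (Har (fun h => if Nat.eq_dec (chi h) c then true else false)) as [g1 [b Hb]].
    destruct b.
    + exists g1. intros f f'.
      pose proof (Hb f (comp g1 f) (fun a => eq_refl)) as H1.
      pose proof (Hb f' (comp g1 f') (fun a => eq_refl)) as H2.
      simpl in *. destruct Nat.eq_dec; destruct Nat.eq_dec; congruence.
    + destruct (IH (fun h => chi (comp g1 h))) as [g2 Hg2].
      { intros h. pose proof (Hb h (comp g1 h) (fun a => eq_refl)) as H. simpl in H.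
        destruct (Nat.eq_dec (chi (comp g1 h)) c) as [e|n]; [discriminate|].
        destruct (Hc (comp g1 h)) as [e|i]; [congruence|exact i]. }
      exists (comp g1 g2). intros f f'. rewrite !comp_assoc. apply Hg2.
Qed.


Definition toL {L E} {K : structure L} {X : expansion E K}
  (g : Emb (expand K X) (expand K X)) : Emb K K :=
  exist _ (proj1_sig g) (proj1 (proj1 (emb_split K K X X _) (proj2_sig g))).

Definition ofStar {L E} {K A : structure L} {X : expansion E K} {Y : expansion E A}
  (h : Emb (expand A Y) (expand K X)) : Emb A K :=
  exist _ (proj1_sig h) (proj1 (proj1 (emb_split A K Y X _) (proj2_sig h))).

Definition toStar {L E} {K A : structure L} {X : expansion E K} {Y : expansion E A}
  (f : Emb A K) (H : agree A K Y X (proj1_sig f)) : Emb (expand A Y) (expand K X) :=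
  exist _ (proj1_sig f) (proj2 (emb_split A K Y X _) (conj (proj2_sig f) H)).

Lemma agree_g {L E} {K : structure L} {X : expansion E K}
  (g : Emb (expand K X) (expand K X)) : agree K K X X (proj1_sig g).
Proof. exact (proj2 (proj1 (emb_split K K X X _) (proj2_sig g))). Qed.

Lemma agree_comp {L E} (A K : structure L) (Y : expansion E A) (X : expansion E K) f g :
  agree A K Y X f -> agree K K X X g -> agree A K Y X (fun a => g (f a)).
Proof. unfold agree in *. intros H1 H2 e x. rewrite H1. apply (H2 e (fun i => f (x i))). Qed.

Lemma agree_pull {L E} (A K : structure L) (X : expansion E K) f :
  agree A K (pull A K X f) X f.
Proof. intros e x; unfold pull; tauto. Qed.

Lemma upper {L E} (K : structure L) (X : expansion E K) (A : structure L) (HA : is_finite A)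
  (Harr : forall As, finite_sub As (expand K X) -> arrow2 (expand K X) (expand K X) As)
  (lc : list nat) : forall ls, (forall Y, In Y ls -> exps_in K X A Y) ->
  forall chi : Emb A K -> nat, (forall f, In (chi f) lc) ->
  exists g : Emb (expand K X) (expand K X), forall Y, In Y ls -> forall f f' : Emb A K,
    agree A K Y X (proj1_sig f) -> agree A K Y X (proj1_sig f') ->
    chi (comp (toL g) f) = chi (comp (toL g) f').
Proof.
  induction ls as [|Y ls IH]; intros HY chi Hc.
  - exists (idE _). intros Y [].
  - assert (fs : finite_sub (expand A Y) (expand K X)).
    { split; [exact HA | exact (HY Y (or_introl eq_refl))]. }
    destruct (multi _ _ (Harr _ fs) lc (fun h => chi (ofStar h)) (fun h => Hc _)) as [g1 Hg1].
    destruct (IH (fun Y' H => HY Y' (or_intror H)) (fun f => chi (comp (toL g1) f))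
                (fun f => Hc _)) as [g2 Hg2].
    exists (comp g1 g2).
    assert (Et : forall f : Emb A K, comp (toL (X:=X) (comp g1 g2)) f = comp (toL g1) (comp (toL g2) f))
      by (intros; apply emb_ext; reflexivity).
    intros Y' HY' f f' Hf Hf'. rewrite !Et.
    destruct HY' as [<- | HY'].
    + assert (Hk : forall k (Hk : agree A K Y X (proj1_sig k)),
                 comp (toL g1) k = ofStar (comp g1 (toStar k Hk)))
        by (intros; apply emb_ext; reflexivity).
      rewrite (Hk (comp (toL g2) f) (agree_comp _ _ _ _ _ _ Hf (agree_g g2))).
      rewrite (Hk (comp (toL g2) f') (agree_comp _ _ _ _ _ _ Hf' (agree_g g2))).
      apply Hg1.
    + exact (Hg2 Y' HY' f f' Hf Hf').
Qed.

Lemma pick {L E} (K : structure L) (X : expansion E K) (A : structure L) (T : Type)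
  (col : Emb A K -> T) : forall ls : list (expansion E A), exists lc : list T,
  length lc <= length ls /\ forall Y, In Y ls -> forall f : Emb A K, agree A K Y X (proj1_sig f) ->
    exists f0 : Emb A K, agree A K Y X (proj1_sig f0) /\ In (col f0) lc.
Proof.
  induction ls as [|Y ls IH].
  - exists nil. split; [simpl; lia | intros Y []].
  - destruct IH as [lc [Hlen Hlc]].
    destruct (classic (exists f0 : Emb A K, agree A K Y X (proj1_sig f0))) as [[f0 H0]|Hn].
    + exists (col f0 :: lc). split; [simpl; lia|].
      intros Y' [<-|H] f Hf.
      * exists f0; split; [auto | left; reflexivity].
      * destruct (Hlc Y' H f Hf) as [f1 [H1 H2]]. exists f1; split; [auto | right; auto].
    + exists lc. split; [simpl; lia|].
      intros Y' [<-|H] f Hf.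
      * exfalso; apply Hn; exists f; auto.
      * exact (Hlc Y' H f Hf).
Qed.

Lemma nodup_exact {T} (P : T -> Prop) (l0 : list T) :
  exists l, NoDup l /\ forall x, (P x /\ In x l0) <-> In x l.
Proof.
  induction l0 as [|a l0 IH].
  - exists nil. split; [constructor | intros; simpl; tauto].
  - destruct IH as [l [Hnd Hl]].
    destruct (classic (P a /\ ~ In a l)) as [[Pa Na]|Hc].
    + exists (a :: l). split; [constructor; auto|]. intros x; simpl. split.
      * intros [Px [<-|Hx]]; [left; reflexivity | right; apply Hl; auto].
      * intros [<-|Hx]; [split; auto | apply Hl in Hx; tauto].
    + exists l. split; auto. intros x; simpl. split.
      * intros [Px [<-|Hx]].
        -- apply NNPP; intro; apply Hc; auto.
        -- apply Hl; auto.
      * intros Hx; apply Hl in Hx; tauto.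
Qed.

Definition idx_of {T} (l : list T) (d : T) (y : T)
  (H : exists i, i < length l /\ nth i l d = y) : Fin.t (length l) :=
  Fin.of_nat_lt (proj1 (proj2_sig (constructive_indefinite_description _ H))).

Lemma idx_of_spec {T} (l : list T) (d y : T) H :
  nth (proj1_sig (Fin.to_nat (idx_of l d y H))) l d = y.
Proof.
  unfold idx_of. rewrite Fin.to_nat_of_nat. simpl.
  exact (proj2 (proj2_sig (constructive_indefinite_description _ H))).
Qed.

Lemma realize {L E} (K : structure L) (X : expansion E K) (Hrec : recurrent K X)
  (A : structure L) (g : Emb K K) (Y : expansion E A) (HY : exps_in K X A Y) :
  exists f : Emb A K, pull A K X (fun a => proj1_sig g (proj1_sig f a)) = Y.
Proof.
  destruct (Hrec g) as [eta]. destruct HY as [em].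
  destruct (proj1 (emb_split K K X (pull K K X (proj1_sig g)) _) (proj2_sig eta)) as [Heta Heta2].
  destruct (proj1 (emb_split A K Y X _) (proj2_sig em)) as [He He2].
  exists (exist _ _ (emb_comp _ _ _ _ _ He Heta)). simpl.
  apply functional_extensionality_dep; intro e'; apply functional_extensionality; intro x;
    apply propositional_extensionality.
  symmetry. etransitivity; [apply He2|]. apply (Heta2 e' (fun i => proj1_sig em (x i))).
Qed.

Theorem proposition2p8 (L E : lang) (K : structure L) (X : expansion E K) :
  Fraisse K ->
  recurrent K X ->
  precompact K X ->
  (forall Astar : structure (Lsum L E), finite_sub Astar (expand K X) ->
     arrow2 (expand K X) (expand K X) Astar) ->
  finite_BRD K /\ big_ramsey_structure K X /\ recurrent K X /\
  (forall A : structure L, finite_sub A K ->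
     exists n, has_card (exps_in K X A) n /\ BRD A K n).
Proof.
  intros _ Hrec Hpc Harr.
  assert (Main : forall A, finite_sub A K -> exists n, has_card (exps_in K X A) n /\ BRD A K n).
  { intros A HAs. destruct HAs as [HA HAe].
    destruct (Hpc A (conj HA HAe)) as [l0 Hl0].
    destruct (nodup_exact (exps_in K X A) l0) as [l [Hnd Hl']].
    assert (Hl : forall Y, exps_in K X A Y <-> In Y l).
    { intros Y. rewrite <- Hl'. split; [intros H; split; auto | tauto]. }
    assert (Hin : forall f : Emb A K, In (pull A K X (proj1_sig f)) l).
    { intros f. apply Hl. constructor. exact (toStar f (agree_pull A K X _)). }
    exists (length l). split; [exists l; auto|]. split.
    - intros r Hr chi.
      destruct (upper K X A HA Harr (seq 0 r) l (fun Y H => proj2 (Hl Y) H)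
                  (fun f => proj1_sig (Fin.to_nat (chi f)))) as [g Hg].
      { intros f. apply in_seq. pose proof (proj2_sig (Fin.to_nat (chi f))). simpl in *. lia. }
      destruct (pick K X A _ (fun f => chi (comp (toL g) f)) l) as [lc [Hlen Hlc]].
      exists (toL g). exists lc. split; [lia|].
      intros c [f [h [Hh ->]]].
      assert (h = comp (toL g) f) by (apply emb_ext; exact Hh). subst h.
      destruct (Hlc _ (Hin f) f (agree_pull A K X _)) as [f0 [H0 Hin0]].
      pose proof (Hg _ (Hin f) f f0 (agree_pull A K X _) H0) as Heq.
      apply Fin.to_nat_inj in Heq. rewrite Heq. exact Hin0.
    - intros t' Ht'. destruct (le_lt_dec (length l) t') as [|Hlt]; auto. exfalso.
      set (d := (fun e x => False) : expansion E A).
      set (chi := fun f : Emb A K => idx_of l d _ (In_nth l _ d (Hin f))).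
      destruct (Ht' (length l) Hlt chi) as [g [lc [Hlen Hlc]]].
      assert (Hinc : incl l (map (fun c => nth (proj1_sig (Fin.to_nat c)) l d) lc)).
      { intros Y HY. apply Hl in HY. destruct (realize K X Hrec A g Y HY) as [f Hf].
        assert (Hc : In (chi (comp g f)) lc).
        { apply Hlc. exists f, (comp g f). split; auto. }
        rewrite <- Hf. change (pull A K X (fun a => proj1_sig g (proj1_sig f a)))
          with (pull A K X (proj1_sig (comp g f))).
        rewrite <- (idx_of_spec l d _ (In_nth l _ d (Hin (comp g f)))).
        apply (in_map (fun c => nth (proj1_sig (Fin.to_nat c)) l d)). exact Hc. }
      pose proof (NoDup_incl_length Hnd Hinc). rewrite length_map in H. lia. }
  split; [|split; [|split; auto]].
  - intros A HA. destruct (Main A HA) as [n [_ Hn]]. eauto.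
  - intros A HA. destruct (Main A HA) as [n [H1 H2]]. exists n. split; auto. split; auto.
    intros g Y HY. apply realize; auto.
Qed.
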